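(* Consider a mean field game with finite state space $\mathcal{S}$, finite action space $\mathcal{A}$, transition rates $Q_{ija}(m)$, rewards $r_{ia}(m)$ and discount factor $\beta\in(0,1)$ satisfying the standing assumptions in the context. Let $\bar m\in\mathcal{P}(\mathcal{S})$ and let $d$ be a deterministic stationary strategy with $\mathcal{D}(\bar m)=\{d\}$. Then there is $\epsilon>0$ such that $\mathcal{D}(m')=\{d\}$ for all $m'\in\mathcal{P}(\mathcal{S})$ with $\|m'-\bar m\|<\epsilon$.
   Context: $\mathcal{S}=\{1,\dots,S\}$, $\mathcal{A}=\{1,\dots,A\}$, $\mathcal{P}(\mathcal{S})$ is the probability simplex in $\mathbb{R}^S$. For each $a$ and $m$, $(Q_{ija}(m))_{i,j}$ is a conservative generator ($Q_{ija}(m)\ge0$ for $i\neq j$, rows sum to $0$); each $m\mapsto Q_{ija}(m)$ is Lipschitz continuous and each $m\mapsto r_{ia}(m)$ is continuous on $\mathcal{P}(\mathcal{S})$. A deterministic stationary strategy is a map $d:\mathcal{S}\to\mathcal{A}$. For fixed $m$, $V^\ast(m)\in\mathbb{R}^S$ is the unique solution of $\beta V_i=\max_{a}\{r_{ia}(m)+\sum_jQ_{ija}(m)V_j\}$ (the optimal value of the discounted continuous-time MDP with constant rates $Q_{ija}(m)$ and rewards $r_{ia}(m)$). $O_i(m)=\operatorname{argmax}_{a}\{r_{ia}(m)+\sum_jQ_{ija}(m)V^\ast_j(m)\}$ and $\mathcal{D}(m)=\{d:\mathcal{S}\to\mathcal{A}: d(i)\in O_i(m)\ \forall i\}$. *)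

(* Defs.v *)
From HB Require Import structures.
From mathcomp Require Import all_boot all_order all_algebra.
From mathcomp Require Import all_classical all_reals all_analysis.
Set Implicit Arguments. Unset Strict Implicit. Unset Printing Implicit Defensive.
Import Order.TTheory GRing.Theory Num.Theory.
Import numFieldNormedType.Exports.
Local Open Scope classical_set_scope.
Local Open Scope ring_scope.

Section MFG.
Variables (R : realType) (nS nA : nat).

Definition simplex : set 'rV[R]_nS :=
  [set m | (forall i, 0 <= m ord0 i) /\ \sum_(i < nS) m ord0 i = 1].

Variables (Q : 'I_nS -> 'I_nS -> 'I_nA -> 'rV[R]_nS -> R)
          (r : 'I_nS -> 'I_nA -> 'rV[R]_nS -> R) (beta : R).

Definition bellman_term (m : 'rV[R]_nS) (V : 'I_nS -> R) (i : 'I_nS) (a : 'I_nA) : R :=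
  r i a m + \sum_(j < nS) Q i j a m * V j.

Definition is_bellman_solution (m : 'rV[R]_nS) (V : 'I_nS -> R) : Prop :=
  forall i, (exists a, beta * V i = bellman_term m V i a) /\
            (forall a, bellman_term m V i a <= beta * V i).

(* V*(m): the (unique) solution of the Bellman equation *)
Definition Vstar (m : 'rV[R]_nS) : 'I_nS -> R :=
  xget (fun _ => 0) [set V | is_bellman_solution m V].

Definition Oset (m : 'rV[R]_nS) (i : 'I_nS) : set 'I_nA :=
  [set a | forall b, bellman_term m (Vstar m) i b <= bellman_term m (Vstar m) i a].

Definition Dset (m : 'rV[R]_nS) : set ('I_nS -> 'I_nA) :=
  [set d | forall i, Oset m i (d i)].

Definition conservative_generators : Prop :=
  forall a m, simplex m ->
    (forall i j, i != j -> 0 <= Q i j a m) /\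
    (forall i, \sum_(j < nS) Q i j a m = 0).

Definition Q_lipschitz : Prop :=
  forall i j a, exists L : R, forall m m', simplex m -> simplex m' ->
    `|Q i j a m - Q i j a m'| <= L * `|m - m'|.

Definition r_continuous : Prop :=
  forall i a, {within simplex, continuous (r i a)}.

End MFG.

(* Main.v *)
Require Import Defs.
From HB Require Import structures.
From mathcomp Require Import all_boot all_order all_algebra.
From mathcomp Require Import all_classical all_reals all_analysis.
Import Order.TTheory GRing.Theory Num.Theory.
Import numFieldNormedType.Exports.
Local Open Scope classical_set_scope.
Local Open Scope ring_scope.
From mathcomp Require Import lra.
Set Implicit Arguments. Unset Strict Implicit.

Lemma argmax_ex (R : realType) (T : finType) (x0 : T) (f : T -> R) :
  exists k, forall j, f j <= f k.
Proof.
case: (@arg_maxP _ R T x0 xpredT f isT) => k _ hk.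
by exists k => j; apply: hk.
Qed.

Section Lin.
Variables (R : realType) (n : nat) (beta : R).
Hypothesis hb : 0 < beta.

Definition gen (G : 'I_n -> 'I_n -> R) :=
  (forall i j, i != j -> 0 <= G i j) /\ (forall i, \sum_(j < n) G i j = 0).

Lemma lin_sub (G : 'I_n -> 'I_n -> R) (V W : 'I_n -> R) i :
  \sum_(j < n) G i j * (V j - W j) =
  \sum_(j < n) G i j * V j - \sum_(j < n) G i j * W j.
Proof. by rewrite -sumrB; apply: eq_bigr => j _; rewrite mulrBr. Qed.

Lemma lin_opp (G : 'I_n -> 'I_n -> R) (V : 'I_n -> R) i :
  \sum_(j < n) G i j * (- V j) = - \sum_(j < n) G i j * V j.
Proof. by rewrite -sumrN; apply: eq_bigr => j _; rewrite mulrN. Qed.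

Lemma maxP G (W : 'I_n -> R) e : gen G ->
  (forall i, beta * W i - \sum_(j < n) G i j * W j <= e) ->
  forall i, beta * W i <= e.
Proof.
move=> [hG1 hG2] hW i.
have [k hk] := @argmax_ex _ _ i W.
have hS : \sum_(j < n) G k j * W j <= 0.
  have -> : \sum_(j < n) G k j * W j = \sum_(j < n) G k j * (W j - W k).
    rewrite lin_sub -mulr_suml hG2 mul0r subr0 //.
  apply: sumr_le0 => j _.
  case: (eqVneq j k) => [->|ne]; first by rewrite subrr mulr0.
  apply: mulr_ge0_le0; first by apply: hG1; rewrite eq_sym.
  by rewrite subr_le0.
have h1 : beta * W i <= beta * W k by rewrite ler_pM2l.
have h2 := hW k.
lra.
Qed.

Lemma minP G (W : 'I_n -> R) e : gen G ->
  (forall i, e <= beta * W i - \sum_(j < n) G i j * W j) ->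
  forall i, e <= beta * W i.
Proof.
move=> hG hW i.
have h : beta * - W i <= - e.
  apply: (@maxP G (fun j => - W j) (- e) hG) => k /=.
  rewrite lin_opp mulrN -opprD lerN2; exact: hW.
by rewrite mulrN lerN2 in h.
Qed.

Lemma strict_pos G (W : 'I_n -> R) i : gen G -> (forall j, 0 <= W j) ->
  0 < beta * W i - \sum_(j < n) G i j * W j -> 0 < W i.
Proof.
move=> [hG1 hG2] hW0 h.
rewrite lt0r hW0 andbT; apply/negP => /eqP hWi.
move: h; rewrite hWi mulr0 sub0r (bigD1 i) //= hWi mulr0 add0r oppr_gt0.
rewrite ltNge; apply/negP/negPn.
apply: sumr_ge0 => j hj; apply: mulr_ge0 => //; apply: hG1.
by rewrite eq_sym.
Qed.

Lemma lin_ex G (rr : 'I_n -> R) : gen G ->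
  exists V : 'I_n -> R, forall i, beta * V i - \sum_(j < n) G i j * V j = rr i.
Proof.
move=> hG.
pose B : 'M[R]_n := beta%:M - \matrix_(j, i) G i j.
have key : forall (x : 'rV[R]_n) i,
    (x *m B) ord0 i = beta * x ord0 i - \sum_(j < n) G i j * x ord0 j.
  move=> x i; rewrite /B mulmxBr mul_mx_scalar !mxE; congr (_ - _).
  by apply: eq_bigr => j _; rewrite mxE mulrC.
have uB : B \in unitmx.
  rewrite unitmxE unitfE; apply/negP => /det0P [v vn0 hv].
  move/negP: vn0; apply; apply/eqP/rowP => j.
  have e0 : forall i, beta * v ord0 i - \sum_(j < n) G i j * v ord0 j = 0.
    by move=> i; rewrite -key hv mxE.
  have h1 : beta * v ord0 j <= 0.
    by apply: (@maxP G (fun j => v ord0 j) 0 hG) => i /=; rewrite e0.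
  have h2 : 0 <= beta * v ord0 j.
    by apply: (@minP G (fun j => v ord0 j) 0 hG) => i /=; rewrite e0.
  have : beta * v ord0 j = 0 by apply/eqP; rewrite eq_le h1 h2.
  by move/eqP; rewrite mulf_eq0 (gt_eqF hb) /= => /eqP ->; rewrite mxE.
pose x := (\row_i rr i) *m invmx B.
exists (fun j => x ord0 j) => i.
by rewrite -key /x -mulmxA mulVmx // mulmx1 mxE.
Qed.

End Lin.

Section Bell.
Variables (R : realType) (nS nA : nat)
  (Q : 'I_nS -> 'I_nS -> 'I_nA -> 'rV[R]_nS -> R)
  (r : 'I_nS -> 'I_nA -> 'rV[R]_nS -> R) (beta : R).
Hypothesis hb : 0 < beta.
Hypothesis hQ : conservative_generators Q.

Lemma gen_pol m (p : 'I_nS -> 'I_nA) : simplex m ->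
  gen (fun i j => Q i j (p i) m).
Proof.
move=> hm; split=> [i j ij|i]; first exact: ((hQ (p i) hm).1 i j ij).
exact: ((hQ (p i) hm).2 i).
Qed.

Lemma bell_le m V W : simplex m -> is_bellman_solution Q r beta m V ->
  is_bellman_solution Q r beta m W -> forall i, V i <= W i.
Proof.
move=> hm hV hW.
have [p hp] := choice (fun i => (hV i).1).
have hx : forall i, beta * (V i - W i) -
    \sum_(j < nS) Q i j (p i) m * (V j - W j) <= 0.
  move=> i; rewrite (lin_sub (fun i j => Q i j (p i) m)).
  have := (hW i).2 (p i); have := hp i; rewrite /bellman_term.
  lra.
have h := @maxP _ _ _ hb _ (fun j => V j - W j) 0 (gen_pol p hm) hx.
move=> i; have := h i; rewrite pmulr_rle0 // subr_le0 //.
Qed.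

Lemma bell_uniq m V W : simplex m -> is_bellman_solution Q r beta m V ->
  is_bellman_solution Q r beta m W -> V = W.
Proof.
move=> hm hV hW; apply: funext => i; apply/eqP; rewrite eq_le.
by rewrite (bell_le hm hV hW) (bell_le hm hW hV).
Qed.

Lemma Vstar_eq m V : simplex m -> is_bellman_solution Q r beta m V ->
  Vstar Q r beta m = V.
Proof.
move=> hm hV; apply: (bell_uniq hm) => //.
exact: (xgetPex (fun=> 0) (ex_intro _ V hV)).
Qed.

Lemma bell_ex m (p0 : 'I_nS -> 'I_nA) : simplex m ->
  exists V, is_bellman_solution Q r beta m V.
Proof.
move=> hm.
have hex : forall f : {ffun 'I_nS -> 'I_nA}, exists V : 'I_nS -> R,
    forall i, beta * V i - \sum_(j < nS) Q i j (f i) m * V j = r i (f i) m.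
  by move=> f; apply: (lin_ex hb (fun i => r i (f i) m) (gen_pol f hm)).
have [Vf hVf] := choice hex.
have [fs hfs] := @argmax_ex _ _ (finfun p0) (fun f => \sum_(i < nS) Vf f i).
exists (Vf fs) => i; split.
  by exists (fs i); rewrite /bellman_term; have := hVf fs i; lra.
move=> a; rewrite leNgt; apply/negP => hlt.
pose f' : {ffun 'I_nS -> 'I_nA} := [ffun k => if k == i then a else fs k].
pose W := fun k => Vf f' k - Vf fs k.
have hf'i : f' i = a by rewrite /f' ffunE eqxx.
have hf'k : forall k, k != i -> f' k = fs k.
  by move=> k ne; rewrite /f' ffunE (negbTE ne).
have hW : forall k, 0 <= beta * W k - \sum_(j < nS) Q k j (f' k) m * W j.
  move=> k; rewrite /W (lin_sub (fun i j => Q i j (f' i) m)).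
  have := hVf f' k.
  case: (eqVneq k i) => [->|ne].
    rewrite hf'i; move: hlt; rewrite /bellman_term; lra.
  rewrite (hf'k k ne); have := hVf fs k; lra.
have hW0 : forall k, 0 <= W k.
  move=> k; have := @minP _ _ _ hb _ W 0 (gen_pol f' hm) hW k.
  by rewrite pmulr_rge0.
have hWi : 0 < W i.
  apply: (@strict_pos _ _ beta _ W i (gen_pol f' hm) hW0).
  rewrite /W (lin_sub (fun i j => Q i j (f' i) m)).
  have := hVf f' i; rewrite hf'i.
  move: hlt; rewrite /bellman_term; lra.
have hs : 0 < \sum_(k < nS) W k.
  rewrite (bigD1 i) //=; apply: (lt_le_trans hWi); rewrite lerDl.
  by apply: sumr_ge0 => k _.
have := hfs f'; rewrite /W sumrB in hs; lra.
Qed.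

End Bell.

Section Cvg.
Variables (R : realType) (nS nA : nat)
  (Q : 'I_nS -> 'I_nS -> 'I_nA -> 'rV[R]_nS -> R)
  (r : 'I_nS -> 'I_nA -> 'rV[R]_nS -> R) (mbar : 'rV[R]_nS).
Hypothesis hQL : Q_lipschitz Q.
Hypothesis hr : r_continuous r.
Hypothesis hmbar : simplex mbar.

Local Notation F := (within (@simplex R nS) (nbhs mbar)).

Lemma cvg_sumf k (f : 'I_k -> 'rV[R]_nS -> R) (l : 'I_k -> R) :
  (forall j, f j @ F --> l j) ->
  (fun m => \sum_(j < k) f j m) @ F --> \sum_(j < k) l j.
Proof.
elim: k f l => [|k IH] f l h.
  under eq_fun do rewrite big_ord0.
  rewrite big_ord0; exact: cvg_cst.
under eq_fun do rewrite big_ord_recr /=.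
rewrite big_ord_recr /=.
apply: cvgD; last exact: h.
exact: (IH (fun j => f (widen_ord (leqnSn k) j))).
Qed.

Lemma Qcvg i j a : Q i j a m @[m --> F] --> Q i j a mbar.
Proof.
have [L hL] := hQL i j a.
apply/cvgrPdist_lt => e e0.
rewrite near_withinE; apply/(@nbhs_normP R 'rV[R]_nS).
have hL1 : 0 < `|L| + 1 by apply: ltr_wpDl (normr_ge0 _) ltr01.
exists (e / (`|L| + 1)) => /=; first by rewrite divr_gt0.
move=> y /= hy hsy.
have := hL mbar y hmbar hsy.
have t0 : 0 <= `|mbar - y| := normr_ge0 _.
have ht : `|mbar - y| * (`|L| + 1) < e by rewrite -ltr_pdivlMr.
have hLt : L * `|mbar - y| <= `|L| * `|mbar - y| by rewrite ler_wpM2r // ler_norm.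
move: ht hLt t0.
set t := `|mbar - y|.
move=> ht hLt t0 hq.
nra.
Qed.

Lemma rcvg i a : r i a m @[m --> F] --> r i a mbar.
Proof.
have hc := @hr i a.
have h := (@subspace_continuousP _ (@simplex R nS) _ (r i a)).1 hc mbar hmbar.
exact: h.
Qed.

Lemma btcvg (U : 'I_nS -> R) i a :
  bellman_term Q r m U i a @[m --> F] --> bellman_term Q r mbar U i a.
Proof.
apply: cvgD; first exact: rcvg.
apply: cvg_sumf => j.
apply: cvgMr_tmp; exact: Qcvg.
Qed.

End Cvg.

Unset Implicit Arguments. Set Strict Implicit.

Lemma wS (R : realType) n (mbar : 'rV[R]_n) (P Q : set 'rV[R]_n) :
  (forall x, P x -> Q x) -> within (@simplex R n) (nbhs mbar) P ->
  within (@simplex R n) (nbhs mbar) Q.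
Proof. by move=> h; apply: filterS. Qed.

Theorem lemma4p1 (R : realType) (nS nA : nat)
  (Q : 'I_nS -> 'I_nS -> 'I_nA -> 'rV[R]_nS -> R)
  (r : 'I_nS -> 'I_nA -> 'rV[R]_nS -> R) (beta : R)
  (hbeta : 0 < beta < 1)
  (hQ : conservative_generators Q)
  (hQL : Q_lipschitz Q)
  (hr : r_continuous r)
  (mbar : 'rV[R]_nS) (hmbar : simplex mbar)
  (d : 'I_nS -> 'I_nA)
  (hD : Dset Q r beta mbar = [set d]) :
  exists eps : R, 0 < eps /\
    forall m' : 'rV[R]_nS, simplex m' -> `|m' - mbar| < eps ->
      Dset Q r beta m' = [set d].
Proof.
have hb : 0 < beta by case/andP: hbeta.
pose bt := bellman_term Q r.
have [Vb hVb] := @bell_ex R nS nA Q r beta hb hQ mbar d hmbar.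
have hVs : Vstar Q r beta mbar = Vb := Vstar_eq hb hQ hmbar hVb.
have hDd : Dset Q r beta mbar d by rewrite hD.
have hDi : forall i c, bt mbar Vb i c <= bt mbar Vb i (d i).
  by move=> i c; have := hDd i c; rewrite hVs.
have hO : forall i b, (forall c, bt mbar Vb i c <= bt mbar Vb i b) -> b = d i.
  move=> i b hb'.
  pose d' := fun k => if k == i then b else d k.
  have : Dset Q r beta mbar d'.
    move=> k; rewrite /d'; case: eqP => [->|_]; last exact: hDd k.
    by move=> c; rewrite hVs; apply: hb'.
  rewrite hD => /= hd'.
  by have := congr1 (fun f => f i) hd'; rewrite /d' eqxx.
have hstrict : forall i b, b != d i -> bt mbar Vb i b < bt mbar Vb i (d i).
  move=> i b nb; rewrite ltNge; apply/negP => hle; move/negP: nb; apply.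
  apply/eqP; apply: hO => c; exact: le_trans (hDi i c) hle.
have hVbd : forall i, beta * Vb i = bt mbar Vb i (d i).
  move=> i; have [[a ha] hall] := hVb i.
  apply/eqP; rewrite eq_le (hall (d i)) andbT ha; exact: hDi.
have hex : forall m, exists V : 'I_nS -> R, simplex m ->
    forall i, beta * V i - \sum_(j < nS) Q i j (d i) m * V j = r i (d i) m.
  move=> m; case: (pselect (simplex m)) => hm.
    have [V hV] := lin_ex hb (fun i => r i (d i) m) (gen_pol hQ d hm).
    by exists V => _; exact: hV.
  by exists (fun=> 0).
have [Vd hVd] := choice hex.
have hWc : forall j, (fun m => Vd m j - Vb j) @ within (@simplex R nS) (nbhs mbar) --> 0.
  move=> j; apply/cvgr0Pnorm_lt => e e0.
  have he : forall i, (fun m => bt m Vb i (d i) - bt mbar Vb i (d i)) @ within (@simplex R nS) (nbhs mbar) --> 0.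
    move=> i; rewrite -(subrr (bt mbar Vb i (d i))); apply: cvgB.
      exact: btcvg.
    exact: cvg_cst.
  have hall : \forall m \near within (@simplex R nS) (nbhs mbar), forall i,
      `|bt m Vb i (d i) - bt mbar Vb i (d i)| < beta * (e / 2).
    apply: filter_forall => i.
    have pos : 0 < beta * (e / 2) by rewrite mulr_gt0 // divr_gt0.
    exact: (cvgr0_norm_lt _ (he i) _ pos).
  have hs : \forall m \near within (@simplex R nS) (nbhs mbar), simplex m by apply: withinT.
  apply: filterS2 hs hall => m hm hall.
  have eq : forall i, beta * (Vd m i - Vb i) -
      \sum_(j < nS) Q i j (d i) m * (Vd m j - Vb j) =
      bt m Vb i (d i) - bt mbar Vb i (d i).
    move=> i; rewrite (lin_sub (fun i j => Q i j (d i) m)).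
    have := hVd m hm i; have := hVbd i; rewrite /bt /bellman_term; lra.
  have h1 := @maxP _ _ _ hb _ (fun j => Vd m j - Vb j) (beta * (e / 2))
    (gen_pol hQ d hm) (fun i => ltac:(rewrite eq; exact: ltW (ltr_normlW (hall i)))) j.
  have h2 := @minP _ _ _ hb _ (fun j => Vd m j - Vb j) (- (beta * (e / 2)))
    (gen_pol hQ d hm) (fun i => ltac:(rewrite eq; exact: ltW (ltrNnormlW (hall i)))) j.
  rewrite /= in h1 h2.
  rewrite -mulrN in h2.
  rewrite ler_pM2l // in h1; rewrite ler_pM2l // in h2.
  rewrite ltr_norml; apply/andP; split; lra.
have hg : forall i b, (fun m => bt m (Vd m) i b) @ within (@simplex R nS) (nbhs mbar) --> bt mbar Vb i b.
  move=> i b.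
  have eq : (fun m => bt m (Vd m) i b) =
      (fun m => bt m Vb i b + \sum_(j < nS) Q i j b m * (Vd m j - Vb j)).
    apply: funext => m; rewrite (lin_sub (fun i j => Q i j b m)) /bt /bellman_term.
    lra.
  rewrite eq.
  have -> : bt mbar Vb i b = bt mbar Vb i b + \sum_(j < nS) Q i j b mbar * 0.
    by rewrite big1 ?addr0 // => j _; rewrite mulr0.
  apply: cvgD; first exact: btcvg.
  apply: cvg_sumf => j.
  apply: cvgM; [exact: (Qcvg hQL hmbar) | exact: hWc].
have hP : \forall m \near within (@simplex R nS) (nbhs mbar),
    forall i b, b != d i -> bt m (Vd m) i b < bt m (Vd m) i (d i).
  apply: filter_forall => i; apply: filter_forall => b.
  case: (eqVneq b (d i)) => [->|nb].
    by apply: nearW => m [].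
  have y0 : 0 < (bt mbar Vb i (d i) - bt mbar Vb i b) / 2.
    by rewrite divr_gt0 // subr_gt0; exact: hstrict.
  have hw1 := (cvgrPdist_lt _ _).1 (hg i (d i)) _ y0.
  have hw2 := (cvgrPdist_lt _ _).1 (hg i b) _ y0.
  have FF : Filter (within (@simplex R nS) (nbhs mbar)) by exact: _.
  move: (hw1 FF) (hw2 FF) => {}hw1 {}hw2.
  apply: (@filterS2 _ (within (@simplex R nS) (nbhs mbar)) _ _ _ _ _ hw1 hw2) => m h1 h2 _.
  have := ltr_normlW h1; have := ltrNnormlW h2; lra.
move: hP; rewrite near_withinE => /(@nbhs_normP R 'rV[R]_nS) [e /= e0 he].
exists e; split => // m' hm' hnorm.
have Pm := he m' (ltac:(by rewrite /= distrC)) hm'.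
have hbell : is_bellman_solution Q r beta m' (Vd m').
  move=> i; split.
    by exists (d i); rewrite /bellman_term; have := hVd m' hm' i; lra.
  move=> a; case: (eqVneq a (d i)) => [->|na].
    by rewrite /bellman_term; have := hVd m' hm' i; lra.
  apply: le_trans (ltW (Pm i a na)) _.
  by rewrite /bt /bellman_term; have := hVd m' hm' i; lra.
have hVs' := Vstar_eq hb hQ hm' hbell.
apply/seteqP; split => f /=.
  move=> hf; apply: funext => i.
  have := hf i; rewrite /Oset /= hVs' => hfi.
  apply/eqP; rewrite -[_ == _]negbK; apply/negP => nf.
  have h1 := Pm i (f i) nf; have h2 := hfi (d i).
  by move: (lt_le_trans h1 h2); rewrite ltxx.
move=> -> i; rewrite /Oset /= hVs' => b.
case: (eqVneq b (d i)) => [->//|nb]; exact: ltW (Pm i b nb).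
Qed.
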